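(* Let $(\beta,\gamma)$ be antiferromagnetic, let $I\subset(0,\infty)$ be a closed interval, let $k\geq1$, and let $R_1(\lambda),\dots,R_k(\lambda)$ and $Q_0(\lambda)$ be twice continuously differentiable functions from $I$ to $(\gamma,1/\beta)$. Let $\mathcal{F}$ be the family of functions $Q_m:I\to(\gamma,1/\beta)$ obtained, for all $m\geq0$ and all sequences $a_0,\dots,a_{m-1}\in[k]$, by $$Q_{i+1}(\lambda)=\frac{1+\gamma\lambda R_{a_i}(\lambda)Q_i(\lambda)}{\beta+\lambda R_{a_i}(\lambda)Q_i(\lambda)},\qquad i=0,\dots,m-1.$$ Then there exist bounded intervals $I_1,I_2$ such that for every $\lambda\in I$ and every $Q\in\mathcal{F}$ we have $Q'(\lambda)\in I_1$ and $Q''(\lambda)\in I_2$.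
   Context: A pair $(\beta,\gamma)$ with $\beta,\gamma\geq0$ is antiferromagnetic if $\beta\gamma\in[0,1)$ and at least one is nonzero; when $\beta=0$, $1/\beta=+\infty$. *)

(* Defs.v *)
From Stdlib Require Import Reals.
Open Scope R_scope.

Definition antiferro (beta gamma : R) : Prop :=
  0 <= beta /\ 0 <= gamma /\ beta * gamma < 1 /\ (beta <> 0 \/ gamma <> 0).

(* y in the open interval (gamma, 1/beta), with 1/beta = +infinity when beta = 0 *)
Definition in_range (beta gamma y : R) : Prop := gamma < y /\ beta * y < 1.

Definition has_deriv_on (a b : R) (f f' : R -> R) : Prop :=
  forall x, a <= x <= b -> forall eps, 0 < eps ->
    exists delta, 0 < delta /\
      forall y, a <= y <= b -> Rabs (y - x) < delta ->
        Rabs (f y - f x - f' x * (y - x)) <= eps * Rabs (y - x).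

Definition cont_on (a b : R) (f : R -> R) : Prop :=
  forall x, a <= x <= b -> forall eps, 0 < eps ->
    exists delta, 0 < delta /\
      forall y, a <= y <= b -> Rabs (y - x) < delta -> Rabs (f y - f x) < eps.

Definition C2_on (a b : R) (f : R -> R) : Prop :=
  exists f1 f2, has_deriv_on a b f f1 /\ has_deriv_on a b f1 f2 /\ cont_on a b f2.

(* The family F generated from Q0 by the recursion with R_{a_i}, a_i in [k]
   (indices 0..k-1 here). *)
Inductive inFamily (beta gamma : R) (k : nat) (Rs : nat -> R -> R) (Q0 : R -> R)
  : (R -> R) -> Prop :=
| fam_base : inFamily beta gamma k Rs Q0 Q0
| fam_step : forall (Q : R -> R) (i : nat), (i < k)%nat ->
    inFamily beta gamma k Rs Q0 Q ->
    inFamily beta gamma k Rs Q0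
      (fun l => (1 + gamma * l * Rs i l * Q l) / (beta + l * Rs i l * Q l)).

(* Main.v *)
Require Import Defs.
From Stdlib Require Import Reals Lra Psatz.
Open Scope R_scope.

Definition Iab (a b : R) := fun x => a <= x <= b.

Lemma D_in_ext_f (f g d : R -> R) (D : R -> Prop) x0 :
  (forall y, D y -> f y = g y) -> D x0 -> D_in f d D x0 -> D_in g d D x0.
Proof.
  intros E Hx H. unfold D_in, limit1_in, limit_in in *. intros eps Heps.
  destruct (H eps Heps) as [alp [Ha Hb]]. exists alp; split; auto.
  intros x [[Dx Hne] Hd]. rewrite <- (E x Dx), <- (E x0 Hx). apply Hb; split; auto. split; auto.
Qed.

Lemma D_in_ext_d (f d1 d2 : R -> R) (D : R -> Prop) x0 :
  d1 x0 = d2 x0 -> D_in f d1 D x0 -> D_in f d2 D x0.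
Proof. intros E H. unfold D_in in *. rewrite <- E. exact H. Qed.

Lemma D_in_dom (f d : R -> R) (D D' : R -> Prop) x0 :
  (forall y, D y -> D' y) -> D_in f d D' x0 -> D_in f d D x0.
Proof.
  intros E H. unfold D_in, limit1_in, limit_in in *. intros eps Heps.
  destruct (H eps Heps) as [alp [Ha Hb]]. exists alp; split; auto.
  intros x [[Dx Hne] Hd]. apply Hb. split; auto. split; auto.
Qed.

Lemma D_in_Rinv y0 : y0 <> 0 -> D_in Rinv (fun y => - / y ^ 2) no_cond y0.
Proof.
  intros Hy.
  assert (H := derivable_pt_lim_div (fct_cte 1) id y0 0 1
     (derivable_pt_lim_const 1 y0) (derivable_pt_lim_id y0) Hy).
  assert (H2 : D_in (fun y => 1 / y) (fun y => - / y ^ 2) no_cond y0).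
  { apply derivable_pt_lim_D_in.
    replace (- / y0 ^ 2) with ((0 * id y0 - 1 * fct_cte 1 y0) / (id y0)²).
    - exact H.
    - unfold id, fct_cte, Rsqr. field. auto. }
  apply (D_in_ext_f _ _ _ _ _ (fun y _ => Rmult_1_l (/ y))); [exact I | exact H2].
Qed.

Lemma Dinv (f df : R -> R) (D : R -> Prop) x0 :
  D_in f df D x0 -> f x0 <> 0 ->
  D_in (fun x => / f x) (fun x => - df x / (f x) ^ 2) D x0.
Proof.
  intros H Hf.
  assert (H1 := Dcomp D no_cond df (fun y => - / y ^ 2) f Rinv x0 H (D_in_Rinv _ Hf)).
  apply (D_in_dom _ _ _ (Dgf D no_cond f)).
  - intros y Hy. split; [exact Hy | exact I].
  - eapply D_in_ext_d; [| exact H1]. simpl. field. auto.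
Qed.

Lemma hd_to_Din a b f f' : has_deriv_on a b f f' ->
  forall x, a <= x <= b -> D_in f f' (Iab a b) x.
Proof.
  intros H x Hx. unfold D_in, limit1_in, limit_in. simpl. intros eps Heps.
  destruct (H x Hx (eps/2)) as [del [Hd Hb]]; [lra|].
  exists del; split; auto. intros y [[Dy Hne] Hdist]. unfold Rdist in *.
  assert (Hb' := Hb y Dy Hdist).
  assert (Hn : y - x <> 0) by (intro; apply Hne; lra).
  replace ((f y - f x) / (y - x) - f' x) with ((f y - f x - f' x * (y - x)) / (y - x)) by (field; auto).
  unfold Rdiv. rewrite Rabs_mult, Rabs_inv.
  assert (0 < Rabs (y - x)) by (apply Rabs_pos_lt; auto).
  apply (Rmult_lt_reg_r (Rabs (y - x))); auto.
  rewrite Rmult_assoc, Rinv_l by lra. nra.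
Qed.

Lemma D_in_unique a b f d1 d2 x : a < b -> a <= x <= b ->
  D_in f d1 (Iab a b) x -> D_in f d2 (Iab a b) x -> d1 x = d2 x.
Proof.
  intros Hab Hx H1 H2. eapply single_limit; [| exact H1 | exact H2].
  unfold adhDa. intros alp Halp.
  destruct (Rlt_or_le x b) as [Hxb|Hxb].
  - exists (x + Rmin alp (b - x) / 2). unfold D_x, Iab, Rdist.
    assert (0 < Rmin alp (b-x)) by (apply Rmin_pos; lra).
    assert (Rmin alp (b-x) <= alp) by apply Rmin_l.
    assert (Rmin alp (b-x) <= b - x) by apply Rmin_r.
    split; [split; [lra|lra]|]. rewrite Rabs_right; lra.
  - exists (x - Rmin alp (x - a) / 2). unfold D_x, Iab, Rdist.
    assert (0 < Rmin alp (x-a)) by (apply Rmin_pos; lra).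
    assert (Rmin alp (x-a) <= alp) by apply Rmin_l.
    assert (Rmin alp (x-a) <= x - a) by apply Rmin_r.
    split; [split; [lra|lra]|]. rewrite Rabs_left; lra.
Qed.

Definition clamp (a b y : R) := Rmin b (Rmax a y).

Lemma clamp_in a b y : a <= b -> a <= clamp a b y <= b.
Proof. intros. unfold clamp, Rmin, Rmax. repeat destruct Rle_dec; lra. Qed.
Lemma clamp_id a b y : a <= y <= b -> clamp a b y = y.
Proof. intros. unfold clamp, Rmin, Rmax. repeat destruct Rle_dec; lra. Qed.
Lemma clamp_lip a b y c : a <= c <= b -> Rabs (clamp a b y - c) <= Rabs (y - c).
Proof. intros. unfold clamp, Rmin, Rmax. repeat destruct Rle_dec;
  unfold Rabs; repeat destruct Rcase_abs; lra. Qed.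

Lemma cont_clamp a b f : a <= b -> cont_on a b f ->
  forall c, a <= c <= b -> continuity_pt (fun y => f (clamp a b y)) c.
Proof.
  intros Hab H c Hc. unfold continuity_pt, continue_in, limit1_in, limit_in. simpl.
  intros eps Heps. destruct (H c Hc eps Heps) as [del [Hd Hb]].
  exists del; split; auto. intros y [_ Hy]. unfold Rdist in *.
  rewrite (clamp_id a b c Hc). apply Hb. apply clamp_in; auto.
  eapply Rle_lt_trans; [apply clamp_lip; auto| exact Hy].
Qed.

Lemma cont_min a b f : a <= b -> cont_on a b f ->
  exists m, a <= m <= b /\ forall x, a <= x <= b -> f m <= f x.
Proof.
  intros Hab H. destruct (continuity_ab_min _ a b Hab (cont_clamp a b f Hab H)) as [m [Hm Hm2]].
  exists m. split; auto. intros x Hx. specialize (Hm x Hx). simpl in Hm.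
  rewrite (clamp_id a b m Hm2), (clamp_id a b x Hx) in Hm. exact Hm.
Qed.

Lemma cont_max a b f : a <= b -> cont_on a b f ->
  exists m, a <= m <= b /\ forall x, a <= x <= b -> f x <= f m.
Proof.
  intros Hab H. destruct (continuity_ab_maj _ a b Hab (cont_clamp a b f Hab H)) as [m [Hm Hm2]].
  exists m. split; auto. intros x Hx. specialize (Hm x Hx). simpl in Hm.
  rewrite (clamp_id a b m Hm2), (clamp_id a b x Hx) in Hm. exact Hm.
Qed.

Lemma cont_bound a b f : a <= b -> cont_on a b f ->
  exists M, forall x, a <= x <= b -> Rabs (f x) <= M.
Proof.
  intros Hab H. destruct (cont_min a b f Hab H) as [m [_ Hm]].
  destruct (cont_max a b f Hab H) as [M [_ HM]].
  exists (Rmax (Rabs (f m)) (Rabs (f M))). intros x Hx.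
  specialize (Hm x Hx). specialize (HM x Hx).
  unfold Rmax, Rabs; repeat destruct Rle_dec; repeat destruct Rcase_abs; lra.
Qed.

Lemma deriv_cont a b f f' : has_deriv_on a b f f' -> cont_on a b f.
Proof.
  intros H x Hx eps Heps. destruct (H x Hx 1 Rlt_0_1) as [del [Hd Hb]].
  set (K := Rabs (f' x) + 1).
  assert (HK : 0 < K) by (unfold K; pose proof (Rabs_pos (f' x)); lra).
  exists (Rmin del (eps / K)). split.
  { apply Rmin_pos; auto. apply Rdiv_lt_0_compat; auto. }
  intros y Hy Hyx.
  assert (H1 : Rabs (y - x) < del) by (eapply Rlt_le_trans; [exact Hyx| apply Rmin_l]).
  assert (H2 : Rabs (y - x) < eps / K) by (eapply Rlt_le_trans; [exact Hyx| apply Rmin_r]).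
  specialize (Hb y Hy H1).
  assert (H3 : Rabs (f y - f x) <= K * Rabs (y - x)).
  { replace (f y - f x) with ((f y - f x - f' x * (y - x)) + f' x * (y - x)) by ring.
    eapply Rle_trans; [apply Rabs_triang|]. rewrite Rabs_mult. unfold K. lra. }
  assert (K * Rabs (y - x) < eps).
  { apply (Rmult_lt_compat_l K) in H2; auto. unfold Rdiv in H2.
    rewrite <- Rmult_assoc, (Rmult_comm K eps), Rmult_assoc, Rinv_r in H2; lra. }
  lra.
Qed.

Definition cst (be ga xlo xhi : R) := 1 - (be + ga * xlo ^ 2) / ((1 + ga * xhi) * (be + xhi)).
Definition hfun (be ga z : R) := - (1 - be * ga) * z / ((1 + ga * z) * (be + z)).
Definition h1fun (be ga z : R) := - (1 - be * ga) * (be - ga * z ^ 2) / ((1 + ga * z) * (be + z)) ^ 2.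

Lemma frac_le n1 n2 p1 p2 : 0 <= n1 <= n2 -> 0 < p2 <= p1 -> n1 / p1 <= n2 / p2.
Proof.
  intros [H1 H2] [H3 H4]. unfold Rdiv.
  apply Rle_trans with (n1 * / p2).
  - apply Rmult_le_compat_l; auto. apply Rinv_le_contravar; lra.
  - apply Rmult_le_compat_r; auto. left; apply Rinv_0_lt_compat; lra.
Qed.

Lemma Pmono be ga z xhi : 0 <= be -> 0 <= ga -> 0 < z -> z <= xhi ->
  (1 + ga * z) * (be + z) <= (1 + ga * xhi) * (be + xhi).
Proof. intros. assert (ga * z <= ga * xhi) by nra. nra. Qed.

Lemma Ppos be ga z : 0 <= be -> 0 <= ga -> 0 < z -> z <= (1 + ga * z) * (be + z).
Proof. intros. assert (0 <= ga * z) by nra. nra. Qed.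

Lemma cst_range be ga xlo xhi : 0 <= be -> 0 <= ga -> (0 < be \/ 0 < ga) ->
  0 < xlo <= xhi -> 0 <= cst be ga xlo xhi < 1.
Proof.
  intros Hb Hg Hbg [Hx1 Hx2]. unfold cst.
  assert (Hn : 0 < be + ga * xlo ^ 2).
  { assert (0 < xlo^2) by nra. destruct Hbg; nra. }
  clear Hbg.
  assert (HP0 := Ppos be ga xhi Hb Hg ltac:(lra)).
  assert (HP : 0 < (1 + ga * xhi) * (be + xhi)) by lra.
  split.
  - cut ((be + ga * xlo ^ 2) / ((1 + ga * xhi) * (be + xhi)) <= 1). lra.
    apply Rmult_le_reg_r with ((1 + ga * xhi) * (be + xhi)); auto.
    unfold Rdiv. rewrite Rmult_assoc, Rinv_l by lra.
    assert (xlo^2 <= xhi^2) by nra. assert (0 <= ga * xhi) by nra. nra.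
  - cut (0 < (be + ga * xlo ^ 2) / ((1 + ga * xhi) * (be + xhi))). lra.
    apply Rdiv_lt_0_compat; auto.
Qed.

Lemma h_bound be ga xlo xhi z : 0 <= be -> 0 <= ga -> be * ga < 1 ->
  0 < xlo -> xlo <= z <= xhi -> Rabs (hfun be ga z) <= cst be ga xlo xhi.
Proof.
  intros Hb Hg Hbg Hxlo Hz. unfold hfun, cst.
  assert (HP0 := Ppos be ga z Hb Hg ltac:(lra)).
  assert (HP : 0 < (1 + ga * z) * (be + z)) by lra.
  assert (HPh := Pmono be ga z xhi Hb Hg ltac:(lra) ltac:(lra)).
  assert (E : - (1 - be * ga) * z / ((1 + ga * z) * (be + z)) =
             - (1 - (be + 2 * be * ga * z + ga * z ^ 2) / ((1 + ga * z) * (be + z)))).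
  { assert (0 < 1 + ga * z) by nra. field. split; lra. }
  rewrite E, Rabs_Ropp.
  assert (Hq : (be + 2 * be * ga * z + ga * z ^ 2) / ((1 + ga * z) * (be + z)) <= 1).
  { apply Rmult_le_reg_r with ((1 + ga * z) * (be + z)); auto.
    unfold Rdiv. rewrite Rmult_assoc, Rinv_l by lra.
    assert (0 <= be * ga * z) by (apply Rmult_le_pos; nra). nra. }
  rewrite Rabs_right by lra.
  assert ((be + ga * xlo ^ 2) / ((1 + ga * xhi) * (be + xhi)) <=
          (be + 2 * be * ga * z + ga * z ^ 2) / ((1 + ga * z) * (be + z))).
  { apply frac_le; [split | split; lra].
    - assert (0 <= xlo^2) by nra. nra.
    - assert (xlo^2 <= z^2) by nra. assert (0 <= be * ga * z) by (apply Rmult_le_pos; nra). nra. }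
  lra.
Qed.

Lemma h1_bound be ga xlo xhi z : 0 <= be -> 0 <= ga -> be * ga < 1 ->
  0 < xlo -> xlo <= z <= xhi -> Rabs (h1fun be ga z) <= (be + ga * xhi ^ 2) / xlo ^ 2.
Proof.
  intros Hb Hg Hbg Hxlo Hz. unfold h1fun.
  assert (HP := Ppos be ga z Hb Hg ltac:(lra)).
  unfold Rdiv. rewrite Rabs_mult, Rabs_inv, <- RPow_abs.
  rewrite (Rabs_right ((1 + ga * z) * (be + z))) by lra.
  apply frac_le.
  - split; [apply Rabs_pos|]. rewrite Rabs_mult, Rabs_Ropp, (Rabs_right (1 - be*ga)) by lra.
    assert (z^2 <= xhi^2) by nra.
    assert (Rabs (be - ga * z ^ 2) <= be + ga * xhi ^ 2).
    { assert (0 <= ga * z^2) by nra. assert (ga * z^2 <= ga * xhi^2) by nra.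
      unfold Rabs; destruct Rcase_abs; lra. }
    assert (0 <= Rabs (be - ga * z ^ 2)) by apply Rabs_pos.
    assert (0 <= be * ga) by nra. nra.
  - split; [nra|]. apply pow_incr. lra.
Qed.

Lemma Dh be ga z : 0 <= be -> 0 <= ga -> 0 < z ->
  D_in (hfun be ga) (h1fun be ga) no_cond z.
Proof.
  intros Hb Hg Hz.
  assert (H1 : 0 < 1 + ga * z) by nra.
  assert (H : D_in (fun z => (- (1 - be * ga) * z) * / ((1 + ga * z) * (be + z)))
     (fun z => (0 * z + - (1 - be * ga) * 1) * / ((1 + ga * z) * (be + z)) +
        (- (1 - be * ga) * z) * (- ((0 + (0 * z + ga * 1)) * (be + z) + (1 + ga * z) * (0 + 1)) / ((1 + ga * z) * (be + z)) ^ 2)) no_cond z).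
  { apply Dmult.
    - apply Dmult; [apply Dconst | apply Dx].
    - apply Dinv.
      + apply Dmult; apply Dadd; try apply Dconst; try apply Dx. apply Dmult; [apply Dconst|apply Dx].
      + apply Rgt_not_eq. apply Rmult_lt_0_compat; lra. }
  eapply D_in_ext_d; [| exact H]. cbv beta. unfold h1fun. field. split; lra.
Qed.

Lemma DG be ga z : 0 <= be -> 0 < z ->
  D_in (fun z => (1 + ga * z) * / (be + z)) (fun z => (ga * (be + z) - (1 + ga * z)) / (be + z) ^ 2) no_cond z.
Proof.
  intros Hb Hz.
  assert (H : D_in (fun z => (1 + ga * z) * / (be + z))
     (fun z => (0 + (0 * z + ga * 1)) * / (be + z) + (1 + ga * z) * (- (0 + 1) / (be + z) ^ 2)) no_cond z).
  { apply Dmult.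
    - apply Dadd; [apply Dconst|]. apply Dmult; [apply Dconst|apply Dx].
    - apply Dinv; [apply Dadd; [apply Dconst|apply Dx] | lra]. }
  eapply D_in_ext_d; [| exact H]. cbv beta. field. lra.
Qed.

Lemma mono3 a1 a2 b1 b2 c1 c2 : 0 <= a1 <= a2 -> 0 <= b1 <= b2 -> 0 <= c1 <= c2 ->
  a1 * b1 * c1 <= a2 * b2 * c2.
Proof. intros. assert (0 <= a1 * b1) by nra. apply Rmult_le_compat; try lra. apply Rmult_le_compat; lra. Qed.

Lemma mono4 a1 a2 b1 b2 c1 c2 d1 d2 : 0 <= a1 <= a2 -> 0 <= b1 <= b2 -> 0 <= c1 <= c2 -> 0 <= d1 <= d2 ->
  a1 * b1 * c1 * d1 <= a2 * b2 * c2 * d2.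
Proof.
  intros. assert (0 <= a1 * b1) by nra. assert (0 <= a1 * b1 * c1) by nra.
  apply Rmult_le_compat; try lra. apply mono3; lra.
Qed.

Lemma step_lemma (be ga a b rlo rhi M1 M2 qlo qhi B1 B2 : R) (Rf r1 r2 Q d dd : R -> R) :
  0 <= be -> 0 <= ga -> be * ga < 1 -> 0 < be + a * rlo * ga ->
  0 < a -> 0 < rlo -> 0 < qlo ->
  ga + (1 - be * ga) / (be + a * rlo * ga) <= qhi ->
  qlo <= ga + (1 - be * ga) / (be + b * rhi * qhi) ->
  cst be ga (a * rlo * qlo) (b * rhi * qhi) * (/ a + M1 / rlo + B1) <= B1 ->
  (be + ga * (b * rhi * qhi) ^ 2) / (a * rlo * qlo) ^ 2 * (b * rhi * qhi) * (/ a + M1 / rlo + B1) ^ 2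
    + cst be ga (a * rlo * qlo) (b * rhi * qhi) * (/ a ^ 2 + (M2 * rhi + M1 ^ 2) / rlo ^ 2 + B2) <= B2 ->
  (forall l, Iab a b l -> rlo <= Rf l <= rhi /\ Rabs (r1 l) <= M1 /\ Rabs (r2 l) <= M2 /\
      D_in Rf r1 (Iab a b) l /\ D_in r1 r2 (Iab a b) l) ->
  (forall l, Iab a b l -> (qlo <= Q l <= qhi /\ ga < Q l) /\ D_in Q (fun y => Q y * d y) (Iab a b) l /\
      D_in d dd (Iab a b) l /\ Rabs (d l) <= B1 /\ Rabs (dd l) <= B2) ->
  exists d' dd', forall l, Iab a b l ->
    let Q' := (fun l => (1 + ga * l * Rf l * Q l) / (be + l * Rf l * Q l)) in
    (qlo <= Q' l <= qhi /\ ga < Q' l) /\ D_in Q' (fun y => Q' y * d' y) (Iab a b) l /\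
      D_in d' dd' (Iab a b) l /\ Rabs (d' l) <= B1 /\ Rabs (dd' l) <= B2.
Proof.
  intros Hb Hg Hbg Hbg' Ha Hrlo Hqlo HU HL HB1 HB2 HR HQ.
  set (X := fun y => y * Rf y * Q y).
  set (e := fun y => / y + r1 y * / Rf y + d y).
  set (e1 := fun y => - / y ^ 2 + (r2 y * Rf y - r1 y ^ 2) / Rf y ^ 2 + dd y).
  exists (fun y => hfun be ga (X y) * e y).
  exists (fun y => X y * e y * h1fun be ga (X y) * e y + hfun be ga (X y) * e1 y).
  intros l Hl Q'.
  destruct (HR l Hl) as [[HR1 HR2] [Hr1 [Hr2 [DR Dr1]]]].
  destruct (HQ l Hl) as [[[HQ1 HQ2] HQg] [DQ [Dd [Hd Hdd]]]].
  destruct Hl as [Hl1 Hl2].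
  assert (Hl0 : 0 < l) by lra.
  assert (HRp : 0 < Rf l) by lra.
  assert (HQp : 0 < Q l) by lra.
  assert (HXlo : a * rlo * qlo <= X l).
  { unfold X. apply mono3; lra. }
  assert (HXhi : X l <= b * rhi * qhi).
  { unfold X. apply mono3; lra. }
  assert (HXg : a * rlo * ga <= X l).
  { unfold X. apply mono3; lra. }
  assert (Hxlo : 0 < a * rlo * qlo) by (apply Rmult_lt_0_compat; [apply Rmult_lt_0_compat|]; lra).
  assert (HXp : 0 < X l) by lra.
  assert (HbX : 0 < be + X l) by lra.
  assert (HgX : 0 < 1 + ga * X l) by nra.
  assert (HQ'e : Q' l = ga + (1 - be * ga) / (be + X l)).
  { unfold Q', X. unfold X in HbX. field. lra. }
  assert (DX : D_in X (fun y => X y * e y) (Iab a b) l).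
  { assert (H : D_in (fun y => y * Rf y * Q y) (fun y => (1 * Rf y + y * r1 y) * Q y + y * Rf y * (Q y * d y)) (Iab a b) l).
    { apply Dmult; [apply Dmult; [apply Dx | exact DR] | exact DQ]. }
    eapply D_in_ext_d; [| exact H]. cbv beta. unfold X, e. field. lra. }
  assert (De : D_in e e1 (Iab a b) l).
  { assert (H : D_in (fun y => / y + r1 y * / Rf y + d y)
       (fun y => - 1 / y ^ 2 + (r2 y * / Rf y + r1 y * (- r1 y / Rf y ^ 2)) + dd y) (Iab a b) l).
    { apply Dadd; [apply Dadd|exact Dd].
      - apply Dinv; [apply Dx | lra].
      - apply Dmult; [exact Dr1 | apply Dinv; [exact DR | lra]]. }
    eapply D_in_ext_d; [| exact H]. cbv beta. unfold e1. field. lra. }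
  assert (DhX : D_in (fun y => hfun be ga (X y)) (fun y => X y * e y * h1fun be ga (X y)) (Iab a b) l).
  { assert (H := Dcomp (Iab a b) no_cond _ _ X (hfun be ga) l DX (Dh be ga (X l) Hb Hg HXp)).
    eapply D_in_dom; [| exact H]. intros y Hy. split; [exact Hy | exact I]. }
  assert (Hh := h_bound be ga (a * rlo * qlo) (b * rhi * qhi) (X l) Hb Hg Hbg Hxlo (conj HXlo HXhi)).
  assert (Hh1 := h1_bound be ga (a * rlo * qlo) (b * rhi * qhi) (X l) Hb Hg Hbg Hxlo (conj HXlo HXhi)).
  assert (Hc := cst_range be ga (a * rlo * qlo) (b * rhi * qhi) Hb Hg).
  assert (He : Rabs (e l) <= / a + M1 / rlo + B1).
  { unfold e. eapply Rle_trans; [apply Rabs_triang|]. apply Rplus_le_compat; [|exact Hd].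
    eapply Rle_trans; [apply Rabs_triang|]. apply Rplus_le_compat.
    - rewrite Rabs_inv, Rabs_right by lra. apply Rinv_le_contravar; lra.
    - rewrite Rabs_mult, Rabs_inv, (Rabs_right (Rf l)) by lra. apply frac_le; [split; [apply Rabs_pos|exact Hr1] | lra]. }
  split; [|split; [|split; [|split]]].
  -
    rewrite HQ'e.
    assert (Hp : 0 < 1 - be * ga) by lra.
    split; [split|].
    + eapply Rle_trans; [exact HL|]. apply Rplus_le_compat_l. unfold Rdiv.
      apply Rmult_le_compat_l; [lra|]. apply Rinv_le_contravar; lra.
    + eapply Rle_trans; [|exact HU]. apply Rplus_le_compat_l. unfold Rdiv.
      apply Rmult_le_compat_l; [lra|]. apply Rinv_le_contravar; lra.
    + assert (0 < (1 - be * ga) / (be + X l)) by (apply Rdiv_lt_0_compat; lra). lra.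
  -
    assert (H := Dcomp (Iab a b) no_cond _ _ X _ l DX (DG be ga (X l) Hb HXp)).
    assert (H2 : D_in (fun y => (1 + ga * X y) * / (be + X y))
      (fun y => X y * e y * ((ga * (be + X y) - (1 + ga * X y)) / (be + X y) ^ 2)) (Iab a b) l).
    { eapply D_in_dom; [| exact H]. intros y Hy. split; [exact Hy | exact I]. }
    apply (D_in_ext_f (fun y => (1 + ga * X y) * / (be + X y))).
    + intros y _. unfold Q', X. unfold Rdiv. ring.
    + split; lra.
    + eapply D_in_ext_d; [| exact H2]. cbv beta. unfold Q', hfun. fold (X l).
      replace (1 + ga * l * Rf l * Q l) with (1 + ga * X l) by (unfold X; ring). field. split; lra.
  -
    apply Dmult; [exact DhX | exact De].
  -
    rewrite Rabs_mult.
    eapply Rle_trans; [| exact HB1]. apply Rmult_le_compat; auto using Rabs_pos.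
  -
    assert (He1 : Rabs (e1 l) <= / a ^ 2 + (M2 * rhi + M1 ^ 2) / rlo ^ 2 + B2).
    { unfold e1. eapply Rle_trans; [apply Rabs_triang|]. apply Rplus_le_compat; [|exact Hdd].
      eapply Rle_trans; [apply Rabs_triang|]. apply Rplus_le_compat.
      - rewrite Rabs_Ropp, Rabs_inv, Rabs_right by (apply Rle_ge; apply pow_le; lra).
        apply Rinv_le_contravar; [apply pow_lt; lra|]. apply pow_incr; lra.
      - unfold Rdiv. rewrite Rabs_mult, Rabs_inv, (Rabs_right (Rf l ^ 2)) by (apply Rle_ge; apply pow_le; lra).
        apply frac_le; [split; [apply Rabs_pos|] | split; [apply pow_lt; lra| apply pow_incr; lra]].
        unfold Rminus. eapply Rle_trans; [apply Rabs_triang|]. rewrite Rabs_Ropp, Rabs_mult, <- RPow_abs.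
        apply Rplus_le_compat.
        + rewrite (Rabs_right (Rf l)) by lra. apply Rmult_le_compat; auto using Rabs_pos; lra.
        + apply pow_incr. split; [apply Rabs_pos|exact Hr1]. }
    eapply Rle_trans; [apply Rabs_triang|]. rewrite !Rabs_mult.
    eapply Rle_trans; [|exact HB2].
    apply Rplus_le_compat.
    + replace ((be + ga * (b * rhi * qhi) ^ 2) / (a * rlo * qlo) ^ 2 * (b * rhi * qhi) * (/ a + M1 / rlo + B1) ^ 2)
        with ((b * rhi * qhi) * (/ a + M1 / rlo + B1) * ((be + ga * (b * rhi * qhi) ^ 2) / (a * rlo * qlo) ^ 2) * (/ a + M1 / rlo + B1)) by ring.
      apply mono4; (split; [apply Rabs_pos|]); auto.
      rewrite Rabs_right; lra.
    + apply Rmult_le_compat; auto using Rabs_pos.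
Qed.

Definition PR a b (Rf : R -> R) (rlo rhi M1 M2 : R) := forall l, a <= l <= b ->
  rlo <= Rf l <= rhi /\ forall r1 r2, has_deriv_on a b Rf r1 -> has_deriv_on a b r1 r2 ->
  Rabs (r1 l) <= M1 /\ Rabs (r2 l) <= M2.

Lemma PR_mono a b Rf rlo rhi M1 M2 rlo' rhi' M1' M2' : PR a b Rf rlo rhi M1 M2 ->
  rlo' <= rlo -> rhi <= rhi' -> M1 <= M1' -> M2 <= M2' -> PR a b Rf rlo' rhi' M1' M2'.
Proof.
  intros H H1 H2 H3 H4 l Hl. destruct (H l Hl) as [[A B] C]. split; [lra|].
  intros r1 r2 D1 D2. destruct (C r1 r2 D1 D2). lra.
Qed.

Lemma deriv_ext a b f g1 g2 : a < b -> has_deriv_on a b f g1 -> has_deriv_on a b f g2 ->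
  forall l, a <= l <= b -> g1 l = g2 l.
Proof.
  intros Hab H1 H2 l Hl. apply (D_in_unique a b f g1 g2 l); auto; apply hd_to_Din; auto.
Qed.

Lemma deriv2_ext a b f1 f2 g1 g2 : a < b -> (forall l, a <= l <= b -> f1 l = f2 l) ->
  has_deriv_on a b f1 g1 -> has_deriv_on a b f2 g2 ->
  forall l, a <= l <= b -> g1 l = g2 l.
Proof.
  intros Hab E H1 H2 l Hl. apply (D_in_unique a b f2 g1 g2 l); auto.
  - eapply D_in_ext_f; [| exact Hl | apply hd_to_Din; eauto]. intros y Hy; apply E; exact Hy.
  - apply hd_to_Din; auto.
Qed.

Lemma PR_exists a b ga Rf : a < b -> 0 <= ga -> C2_on a b Rf ->
  (forall l, a <= l <= b -> ga < Rf l) ->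
  exists rlo rhi M1 M2, 0 < rlo /\ PR a b Rf rlo rhi M1 M2.
Proof.
  intros Hab Hg [f1 [f2 [H1 [H2 H3]]]] Hgt.
  assert (Hab' : a <= b) by lra.
  destruct (cont_min a b Rf Hab' (deriv_cont _ _ _ _ H1)) as [m [Hm Hm2]].
  destruct (cont_max a b Rf Hab' (deriv_cont _ _ _ _ H1)) as [M [HM HM2]].
  destruct (cont_bound a b f1 Hab' (deriv_cont _ _ _ _ H2)) as [N1 HN1].
  destruct (cont_bound a b f2 Hab' H3) as [N2 HN2].
  exists (Rf m), (Rf M), N1, N2. split. { specialize (Hgt m Hm). lra. }
  intros l Hl. split; [split; auto|].
  intros r1 r2 D1 D2.
  assert (E1 : forall y, a <= y <= b -> r1 y = f1 y) by (intros; eapply deriv_ext; eauto).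
  assert (E2 : r2 l = f2 l) by (eapply deriv2_ext; eauto).
  rewrite E1, E2 by auto. auto.
Qed.

Lemma fin_unif a b (Rs : nat -> R -> R) k :
  (forall i, (i < k)%nat -> exists rlo rhi M1 M2, 0 < rlo /\ PR a b (Rs i) rlo rhi M1 M2) ->
  exists rlo rhi M1 M2, 0 < rlo /\ forall i, (i < k)%nat -> PR a b (Rs i) rlo rhi M1 M2.
Proof.
  induction k as [|k IH]; intros H.
  - exists 1, 0, 0, 0. split; [lra|]. intros i Hi. lia.
  - destruct IH as [rlo [rhi [M1 [M2 [Hp HP]]]]].
    { intros i Hi. apply H. lia. }
    destruct (H k ltac:(lia)) as [rlo' [rhi' [M1' [M2' [Hp' HP']]]]].
    exists (Rmin rlo rlo'), (Rmax rhi rhi'), (Rmax M1 M1'), (Rmax M2 M2').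
    split; [apply Rmin_pos; auto|].
    intros i Hi. destruct (Nat.eq_dec i k) as [->|Hne].
    + eapply PR_mono; [exact HP' | apply Rmin_r | apply Rmax_r | apply Rmax_r | apply Rmax_r].
    + eapply PR_mono; [apply HP; lia | apply Rmin_l | apply Rmax_l | apply Rmax_l | apply Rmax_l].
Qed.

Lemma fixb c K n : 0 <= c < 1 -> 0 <= K -> 0 <= n -> c * (K + (n + K / (1 - c))) <= n + K / (1 - c).
Proof.
  intros Hc HK Hn. assert (E : K / (1 - c) * (1 - c) = K) by (field; lra).
  assert (0 <= K / (1 - c)) by (unfold Rdiv; apply Rmult_le_pos; [lra | left; apply Rinv_0_lt_compat; lra]). nra.
Qed.

Lemma fixb2 c A K n : 0 <= c < 1 -> 0 <= A -> 0 <= K -> 0 <= n ->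
  A + c * (K + (n + (A + K) / (1 - c))) <= n + (A + K) / (1 - c).
Proof.
  intros Hc HA HK Hn. assert (E : (A + K) / (1 - c) * (1 - c) = A + K) by (field; lra).
  assert (0 <= (A + K) / (1 - c)) by (unfold Rdiv; apply Rmult_le_pos; [lra | left; apply Rinv_0_lt_compat; lra]). nra.
Qed.

Theorem lemma3p13 (beta gamma a b : R) (k : nat) (Rs : nat -> R -> R) (Q0 : R -> R) :
  antiferro beta gamma ->
  0 < a -> a < b ->
  (1 <= k)%nat ->
  (forall i, (i < k)%nat -> C2_on a b (Rs i)) ->
  (forall i, (i < k)%nat -> forall l, a <= l <= b -> in_range beta gamma (Rs i l)) ->
  C2_on a b Q0 ->
  (forall l, a <= l <= b -> in_range beta gamma (Q0 l)) ->
  exists lo1 hi1 lo2 hi2 : R,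
    forall Q : R -> R, inFamily beta gamma k Rs Q0 Q ->
    forall Q1 Q2 : R -> R, has_deriv_on a b Q Q1 -> has_deriv_on a b Q1 Q2 ->
    forall l, a <= l <= b ->
      lo1 <= Q1 l <= hi1 /\ lo2 <= Q2 l <= hi2.
Proof.
  intros [Hb [Hg [Hbg Hnz]]] Ha Hab Hk HC2 Hrange HQ0 HQ0r.
  assert (Hbg0 : 0 < beta \/ 0 < gamma) by (destruct Hnz; [left|right]; lra).
  assert (Hab' : a <= b) by lra.
  assert (Haa : a <= a <= b) by lra.
  destruct (fin_unif a b Rs k) as [rlo [rhi [M1 [M2 [Hrlo HPR]]]]].
  { intros i Hi. apply (PR_exists a b gamma); auto.
    intros l Hl. apply (Hrange i Hi l Hl). }
  destruct (HC2 0%nat ltac:(lia)) as [f1 [f2 [Hf1 [Hf2 _]]]].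
  destruct (HPR 0%nat ltac:(lia) a Haa) as [[HR0a HR0b] HR0d].
  destruct (HR0d f1 f2 Hf1 Hf2) as [HM1a HM2a].
  assert (HM1 : 0 <= M1) by (pose proof (Rabs_pos (f1 a)); lra).
  assert (HM2 : 0 <= M2) by (pose proof (Rabs_pos (f2 a)); lra).
  assert (Hrhi : 0 < rhi) by lra.
  destruct HQ0 as [g1 [g2 [Hg1 [Hg2 Hg2c]]]].
  destruct (cont_min a b Q0 Hab' (deriv_cont _ _ _ _ Hg1)) as [m [Hm Hmm]].
  destruct (cont_max a b Q0 Hab' (deriv_cont _ _ _ _ Hg1)) as [M [HMx HMM]].
  destruct (cont_bound a b g1 Hab' (deriv_cont _ _ _ _ Hg2)) as [N1 HN1].
  destruct (cont_bound a b g2 Hab' Hg2c) as [N2 HN2].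
  set (q0lo := Q0 m). set (q0hi := Q0 M).
  assert (Hq0lo : gamma < q0lo) by (apply (HQ0r m Hm)).
  assert (Hq0lo' : 0 < q0lo) by lra.
  assert (Hq0 : q0lo <= q0hi) by (apply Hmm; auto).
  assert (HN1p : 0 <= N1) by (pose proof (Rabs_pos (g1 a)); pose proof (HN1 a Haa); lra).
  assert (HN2p : 0 <= N2) by (pose proof (Rabs_pos (g2 a)); pose proof (HN2 a Haa); lra).
  assert (Hbr : 0 < beta + a * rlo * gamma).
  { assert (0 <= a * rlo * gamma) by (apply Rmult_le_pos; [nra|lra]).
    destruct Hbg0; [lra|]. assert (0 < a * rlo * gamma) by (apply Rmult_lt_0_compat; [nra|lra]). lra. }
  set (qhi := Rmax (gamma + (1 - beta * gamma) / (beta + a * rlo * gamma)) q0hi).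
  assert (Hqhi : q0hi <= qhi) by apply Rmax_r.
  set (qlo := Rmin (gamma + (1 - beta * gamma) / (beta + b * rhi * qhi)) q0lo).
  assert (Hqlo : qlo <= q0lo) by apply Rmin_r.
  assert (Hxhi : 0 < b * rhi * qhi) by (apply Rmult_lt_0_compat; [apply Rmult_lt_0_compat|]; lra).
  assert (Hqlop : 0 < qlo).
  { unfold qlo. apply Rmin_pos; auto.
    assert (0 < (1 - beta * gamma) / (beta + b * rhi * qhi)) by (apply Rdiv_lt_0_compat; lra). lra. }
  assert (Hxlo : 0 < a * rlo * qlo) by (apply Rmult_lt_0_compat; [apply Rmult_lt_0_compat|]; lra).
  assert (Hxx : a * rlo * qlo <= b * rhi * qhi) by (apply mono3; lra).
  set (c := cst beta gamma (a * rlo * qlo) (b * rhi * qhi)).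
  assert (Hc : 0 <= c < 1) by (apply cst_range; auto).
  set (K1 := / a + M1 / rlo).
  assert (HK1 : 0 <= K1).
  { unfold K1. assert (0 < / a) by (apply Rinv_0_lt_compat; lra).
    assert (0 <= M1 / rlo) by (unfold Rdiv; apply Rmult_le_pos; [lra | left; apply Rinv_0_lt_compat; lra]). lra. }
  set (n1 := N1 / q0lo).
  assert (Hn1 : 0 <= n1) by (unfold n1, Rdiv; apply Rmult_le_pos; [lra | left; apply Rinv_0_lt_compat; lra]).
  set (B1 := n1 + K1 / (1 - c)).
  set (K2 := / a ^ 2 + (M2 * rhi + M1 ^ 2) / rlo ^ 2).
  assert (HK2 : 0 <= K2).
  { unfold K2. assert (0 < / a ^ 2) by (apply Rinv_0_lt_compat; apply pow_lt; lra).
    assert (0 <= (M2 * rhi + M1 ^ 2) / rlo ^ 2).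
    { unfold Rdiv; apply Rmult_le_pos; [nra | left; apply Rinv_0_lt_compat; apply pow_lt; lra]. }
    lra. }
  set (A := (beta + gamma * (b * rhi * qhi) ^ 2) / (a * rlo * qlo) ^ 2 * (b * rhi * qhi) * (/ a + M1 / rlo + B1) ^ 2).
  assert (HA : 0 <= A).
  { unfold A. apply Rmult_le_pos; [|apply pow2_ge_0]. apply Rmult_le_pos; [|lra].
    unfold Rdiv; apply Rmult_le_pos; [| left; apply Rinv_0_lt_compat; apply pow_lt; lra].
    assert (0 <= gamma * (b * rhi * qhi) ^ 2) by (apply Rmult_le_pos; [lra|apply pow2_ge_0]). lra. }
  set (n2 := (N2 * q0hi + N1 ^ 2) / q0lo ^ 2).
  assert (Hn2 : 0 <= n2).
  { unfold n2, Rdiv; apply Rmult_le_pos; [|left; apply Rinv_0_lt_compat; apply pow_lt; lra].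
    assert (0 <= N2 * q0hi) by nra. nra. }
  set (B2 := n2 + (A + K2) / (1 - c)).
  assert (HB1n : n1 <= B1).
  { unfold B1. assert (0 <= K1 / (1 - c)) by (unfold Rdiv; apply Rmult_le_pos; [lra | left; apply Rinv_0_lt_compat; lra]). lra. }
  assert (HB2n : n2 <= B2).
  { unfold B2. assert (0 <= (A + K2) / (1 - c)) by (unfold Rdiv; apply Rmult_le_pos; [lra | left; apply Rinv_0_lt_compat; lra]). lra. }
  assert (HB1p : 0 <= B1) by lra.
  assert (HB2p : 0 <= B2) by lra.
  assert (Inv : forall Q, inFamily beta gamma k Rs Q0 Q -> exists d dd, forall l, Iab a b l ->
     (qlo <= Q l <= qhi /\ gamma < Q l) /\ D_in Q (fun y => Q y * d y) (Iab a b) l /\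
      D_in d dd (Iab a b) l /\ Rabs (d l) <= B1 /\ Rabs (dd l) <= B2).
  { intros Q HF. induction HF as [|Q i Hi HF IH].
    - exists (fun y => g1 y / Q0 y), (fun y => (g2 y * Q0 y - g1 y ^ 2) / Q0 y ^ 2).
      intros l Hl.
      assert (HQl1 := Hmm l Hl). assert (HQl2 := HMM l Hl). assert (HQl3 := HQ0r l Hl).
      fold q0lo in HQl1. fold q0hi in HQl2. destruct HQl3 as [HQl3 _].
      assert (HQp : 0 < Q0 l) by lra.
      split; [split; [split; lra | lra]|]. split; [|split; [|split]].
      + eapply D_in_ext_d; [| apply hd_to_Din; [exact Hg1 | exact Hl]]. cbv beta. field. lra.
      + apply (D_in_ext_f (fun y => g1 y * / Q0 y)); [intros; reflexivity | exact Hl |].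
        eapply D_in_ext_d; [| apply Dmult; [apply hd_to_Din; [exact Hg2 | exact Hl] |
             apply Dinv; [apply hd_to_Din; [exact Hg1 | exact Hl] | lra]]].
        cbv beta. field. lra.
      + eapply Rle_trans; [|exact HB1n]. unfold n1, Rdiv. rewrite Rabs_mult, Rabs_inv, (Rabs_right (Q0 l)) by lra.
        apply frac_le; [split; [apply Rabs_pos | apply HN1; exact Hl] | lra].
      + eapply Rle_trans; [|exact HB2n]. unfold n2, Rdiv.
        rewrite Rabs_mult, Rabs_inv, (Rabs_right (Q0 l ^ 2)) by (apply Rle_ge; apply pow_le; lra).
        apply frac_le; [split; [apply Rabs_pos|] | split; [apply pow_lt; lra | apply pow_incr; lra]].
        unfold Rminus. eapply Rle_trans; [apply Rabs_triang|]. rewrite Rabs_Ropp, Rabs_mult, <- RPow_abs.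
        apply Rplus_le_compat.
        * rewrite (Rabs_right (Q0 l)) by lra. apply Rmult_le_compat; auto using Rabs_pos; try lra.
        * apply pow_incr. split; [apply Rabs_pos| apply HN1; exact Hl].
    - destruct IH as [d [dd IH]].
      destruct (HC2 i Hi) as [r1 [r2 [Hr1 [Hr2 _]]]].
      destruct (step_lemma beta gamma a b rlo rhi M1 M2 qlo qhi B1 B2 (Rs i) r1 r2 Q d dd)
        as [d' [dd' Hs]]; auto.
      + apply Rmax_l.
      + apply Rmin_l.
      + apply fixb; auto.
      + apply fixb2; auto.
      + intros l Hl. destruct (HPR i Hi l Hl) as [HR1 HR2]. destruct (HR2 r1 r2 Hr1 Hr2).
        repeat split; try lra; apply hd_to_Din; auto.
      + exists d', dd'. intros l Hl. exact (Hs l Hl). }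
  exists (-(qhi * B1)), (qhi * B1), (-(qhi * B1 * B1 + qhi * B2)), (qhi * B1 * B1 + qhi * B2).
  intros Q HF Q1 Q2 HQ1 HQ2 l Hl.
  destruct (Inv Q HF) as [d [dd H]].
  assert (E1 : forall y, Iab a b y -> Q1 y = Q y * d y).
  { intros y Hy. apply (D_in_unique a b Q Q1 (fun y => Q y * d y) y); auto.
    - apply hd_to_Din; auto.
    - apply (H y Hy). }
  assert (E2 : Q2 l = Q l * d l * d l + Q l * dd l).
  { apply (D_in_unique a b Q1 Q2 (fun y => Q y * d y * d y + Q y * dd y) l); auto.
    - apply hd_to_Din; auto.
    - apply (D_in_ext_f (fun y => Q y * d y)); [intros y Hy; symmetry; apply E1; exact Hy | exact Hl |].
      apply Dmult; apply (H l Hl). }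
  destruct (H l Hl) as [[[Hq1 Hq2] _] [_ [_ [Hd Hdd]]]].
  assert (Hql : Rabs (Q l) <= qhi) by (rewrite Rabs_right; lra).
  rewrite E1 by exact Hl. rewrite E2.
  assert (X1 : Rabs (Q l * d l) <= qhi * B1).
  { rewrite Rabs_mult. apply Rmult_le_compat; auto using Rabs_pos. }
  assert (X2 : Rabs (Q l * d l * d l + Q l * dd l) <= qhi * B1 * B1 + qhi * B2).
  { eapply Rle_trans; [apply Rabs_triang|]. rewrite !Rabs_mult. apply Rplus_le_compat.
    - apply mono3; repeat split; auto using Rabs_pos.
    - apply Rmult_le_compat; auto using Rabs_pos. }
  split; [revert X1 | revert X2]; unfold Rabs; destruct Rcase_abs; intros; lra.
Qed.
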